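(* Let $M$ be a finite abelian group of exponent greater than $2$, and let $f$ be a half-automorphism of $L_M$. Then $f((K,1))\in\mathcal{H}_M$.
   Context: Let $K=\{1,a,b,c\}$ be the Klein four-group. Set $L_M=K\times M$ with the operation $(A,x)*(B,y)=(AB,xy)$ if $B=1$, and $(A,x)*(B,y)=(AB,x^{-1}y)$ if $B\neq 1$. Write $(K,1)=\{(A,1):A\in K\}$ and $(1,M)=\{(1,x):x\in M\}$. Let $\mathcal{H}_M$ be the set of subloops $H$ of $L_M$ that are isomorphic to $K$ and satisfy $|H\cap(1,M)|=1$. A half-automorphism of a loop $L$ is a bijection $f:L\to L$ such that $f(XY)\in\{f(X)f(Y),f(Y)f(X)\}$ for all $X,Y\in L$. *)

(* Defs.v *)
From HB Require Import structures.
From mathcomp Require Import all_boot all_fingroup all_solvable.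
Set Implicit Arguments. Unset Strict Implicit. Unset Printing Implicit Defensive.
Local Open Scope group_scope.

(* The Klein four-group K = {1,a,b,c}, realised as bool*bool with
   componentwise xor: 1 = (false,false), a = (true,false),
   b = (false,true), c = (true,true). *)
Definition Klein := (bool * bool)%type.
Definition kone : Klein := (false, false).
Definition kmul (A B : Klein) : Klein := (A.1 (+) B.1, A.2 (+) B.2).

Definition LM (M : finGroupType) := (Klein * M)%type.

Definition lmul (M : finGroupType) (X Y : LM M) : LM M :=
  if Y.1 == kone then (kmul X.1 Y.1, X.2 * Y.2)
  else (kmul X.1 Y.1, X.2^-1 * Y.2).

Definition lone (M : finGroupType) : LM M := (kone, 1).

Definition K1 (M : finGroupType) : {set LM M} := [set X | X.2 == 1].
Definition oneM (M : finGroupType) : {set LM M} := [set X | X.1 == kone].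

Definition subloop (M : finGroupType) (H : {set LM M}) : Prop :=
  [/\ lone M \in H,
      (forall X Y, X \in H -> Y \in H -> lmul X Y \in H),
      (forall X Y Z, X \in H -> Y \in H -> lmul X Z = Y -> Z \in H) &
      (forall X Y Z, X \in H -> Y \in H -> lmul Z X = Y -> Z \in H)].

Definition iso_to_Klein (M : finGroupType) (H : {set LM M}) : Prop :=
  exists g : Klein -> LM M,
    [/\ injective g, g @: [set: Klein] = H &
        forall A B, g (kmul A B) = lmul (g A) (g B)].

Definition in_HM (M : finGroupType) (H : {set LM M}) : Prop :=
  [/\ subloop H, iso_to_Klein H & #|H :&: oneM M| = 1%N].

Definition half_automorphism (M : finGroupType) (f : LM M -> LM M) : Prop :=
  bijective f /\
  forall X Y, f (lmul X Y) = lmul (f X) (f Y) \/ f (lmul X Y) = lmul (f Y) (f X).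

(* Main.v *)
Require Import Defs.
From mathcomp Require Import all_boot all_fingroup all_solvable.
Set Implicit Arguments. Unset Strict Implicit. Unset Printing Implicit Defensive.

Section Helpers.
Local Open Scope group_scope.

Lemma abel_comm (M : finGroupType) : abelian [set: M] -> forall x y : M, x * y = y * x.
Proof. move=> ab x y; exact: (centsP ab) x (in_setT x) y (in_setT y). Qed.

Lemma kmulC (A B : Klein) : kmul A B = kmul B A.
Proof. by case: A B => [[] []] [[] []]. Qed.
Lemma kmulK (A B : Klein) : kmul A (kmul A B) = B.
Proof. by case: A B => [[] []] [[] []]. Qed.
Lemma kmulKr (A B : Klein) : kmul (kmul B A) A = B.
Proof. by case: A B => [[] []] [[] []]. Qed.
Lemma kmul1 (A : Klein) : kmul A kone = A.
Proof. by case: A => [[] []]. Qed.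
Lemma kmul1l (A : Klein) : kmul kone A = A.
Proof. by case: A => [[] []]. Qed.
Lemma kmulnn (A : Klein) : kmul A A = kone.
Proof. by case: A => [[] []]. Qed.
Lemma kmul_inj (A B C : Klein) : kmul A B = kmul A C -> B = C.
Proof. by case: A B C => [[] []] [[] []] [[] []]. Qed.
Lemma kmul_injr (A B C : Klein) : kmul B A = kmul C A -> B = C.
Proof. by case: A B C => [[] []] [[] []] [[] []]. Qed.

Lemma lmulE (M : finGroupType) (X Y : LM M) :
  lmul X Y = (kmul X.1 Y.1, (if Y.1 == kone then X.2 else X.2^-1) * Y.2).
Proof. by rewrite /lmul; case: eqP. Qed.

Lemma lmulP (M : finGroupType) A (x : M) B y :
  lmul (A, x) (B, y) = (kmul A B, (if B == kone then x else x^-1) * y).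
Proof. exact: lmulE. Qed.

Lemma lmul1l (M : finGroupType) (X : LM M) : lmul (lone M) X = X.
Proof. case: X => A x; rewrite lmulE /= kmul1l invg1; by case: eqP; rewrite mul1g. Qed.
Lemma lmul1r (M : finGroupType) (X : LM M) : lmul X (lone M) = X.
Proof. case: X => A x; by rewrite lmulE /= kmul1 mulg1. Qed.

Lemma lcancel (M : finGroupType) (X Y Z : LM M) : lmul X Y = lmul X Z -> Y = Z.
Proof.
case: X Y Z => A x [B y] [C z]; rewrite !lmulP => e; move: (f_equal fst e) (f_equal snd e) => /= e1 e2; have eBC := kmul_inj e1; subst C; by rewrite (mulgI _ _ _ e2).
Qed.
Lemma rcancel (M : finGroupType) (X Y Z : LM M) : lmul Y X = lmul Z X -> Y = Z.
Proof.
case: X Y Z => A x [B y] [C z]; rewrite !lmulP => e; move: (f_equal fst e) (f_equal snd e) => /= e1 e2; have eBC := kmul_injr e1; subst C.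
move: e2; case: eqP => _ h; have h2 := mulIg _ _ _ h; first by rewrite h2. by rewrite (invg_inj h2).
Qed.

Lemma lsq_ne1 (M : finGroupType) (X : LM M) : X.1 != kone -> lmul X X = lone M.
Proof. case: X => A x h; rewrite /= in h; by rewrite lmulP (negbTE h) kmulnn mulVg. Qed.
Lemma lsq_1 (M : finGroupType) (X : LM M) : X.1 = kone -> lmul X X = (kone, X.2 * X.2).
Proof. case: X => A x eA; rewrite /= in eA; subst A; by rewrite lmulP kmulnn eqxx. Qed.

Lemma lmul_inv2 (M : finGroupType) (X Y : LM M) : abelian [set: M] ->
  X.2 * X.2 = 1 -> Y.2 * Y.2 = 1 -> lmul X Y = lmul Y X.
Proof.
case: X Y => A x [B y] ab hx hy; rewrite /= in hx hy.
have ix : x^-1 = x by apply/eqP; rewrite eq_invg_mul hx.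
have iy : y^-1 = y by apply/eqP; rewrite eq_invg_mul hy.
rewrite !lmulP ix iy kmulC; case: eqP; case: eqP => _ _; by rewrite (abel_comm ab x y).
Qed.

End Helpers.

Section Main.
Local Open Scope group_scope.

Lemma exists_big (M : finGroupType) : 2 < exponent [set: M] -> exists t : M, t * t != 1.
Proof.
move=> hexp; case: (pickP (fun t : M => t * t != 1)) => [t ht | h]; first by exists t.
have : exponent [set: M] %| 2.
  apply/exponentP => x _; rewrite expgS expg1; by move: (h x) => /negbFE/eqP.
move/(dvdn_leq (isT : 0 < 2)); by rewrite leqNgt hexp.
Qed.

Lemma sqM (M : finGroupType) : abelian [set: M] -> forall a b : M,
  (a * b) * (a * b) = (a * a) * (b * b).
Proof. move=> ab a b; by rewrite mulgA -(mulgA a b a) (abel_comm ab b a) !mulgA. Qed.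

Lemma f_lone (M : finGroupType) (f : LM M -> LM M) :
  (forall X Y, f (lmul X Y) = lmul (f X) (f Y) \/ f (lmul X Y) = lmul (f Y) (f X)) ->
  f (lone M) = lone M.
Proof.
move=> hh; have e : f (lone M) = lmul (f (lone M)) (f (lone M)).
  by case: (hh (lone M) (lone M)); rewrite lmul1l.
case: (boolP ((f (lone M)).1 == kone)) => h.
- move: e h; case: (f (lone M)) => A z e h; rewrite /= in h.
  rewrite (lsq_1 (X := (A, z)) (eqP h)) /= in e; case: e => -> ez.
  have : z * 1 = z * z by rewrite mulg1 {1}ez.
  by move/mulgI <-.
- by move: (h); rewrite {1}e (lsq_ne1 h).
Qed.

Lemma f_sq (M : finGroupType) (f : LM M -> LM M) :
  (forall X Y, f (lmul X Y) = lmul (f X) (f Y) \/ f (lmul X Y) = lmul (f Y) (f X)) ->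
  forall X, f (lmul X X) = lmul (f X) (f X).
Proof. by move=> hh X; case: (hh X X). Qed.

Lemma f_big (M : finGroupType) (f : LM M -> LM M) :
  injective f ->
  (forall X Y, f (lmul X Y) = lmul (f X) (f Y) \/ f (lmul X Y) = lmul (f Y) (f X)) ->
  forall Y, lmul Y Y != lone M -> (f Y).1 = kone /\ (f Y).2 * (f Y).2 != 1.
Proof.
move=> hi hh Y hY.
have hfY : lmul (f Y) (f Y) != lone M.
  apply/negP => /eqP e; move: hY; rewrite -(f_sq hh) -(f_lone hh) in e.
  by rewrite (hi _ _ e) eqxx.
case: (boolP ((f Y).1 == kone)) => h; last by move: hfY; rewrite (lsq_ne1 h) eqxx.
split; first exact: (eqP h).
apply/negP => /eqP e; move: hfY; by rewrite (lsq_1 (eqP h)) e eqxx.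
Qed.

Lemma f_P (M : finGroupType) (f : LM M -> LM M) :
  abelian [set: M] -> 2 < exponent [set: M] -> injective f ->
  (forall X Y, f (lmul X Y) = lmul (f X) (f Y) \/ f (lmul X Y) = lmul (f Y) (f X)) ->
  forall A (x : M), A != kone -> (f (A, x)).1 != kone.
Proof.
move=> ab hexp hi hh A x hA; apply/negP => h.
have [t ht] := exists_big hexp.
have hY : lmul (kone, t) (kone, t) != lone M.
  rewrite (lsq_1 (X := (kone, t)) (erefl _)); apply/negP => /eqP e.
  by move: (f_equal snd e) => /= /eqP; apply/negP.
have [h1 hn] := f_big hi hh hY.
have hsqX : lmul (f (A, x)) (f (A, x)) = lone M.
  by rewrite -(f_sq hh) (lsq_ne1 (X := (A, x)) hA) (f_lone hh).
have hu : (f (A, x)).2 * (f (A, x)).2 = 1.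
  by move: hsqX; rewrite (lsq_1 (eqP h)) => -[].
have hXY : lmul (f (lmul (A, x) (kone, t))) (f (lmul (A, x) (kone, t))) = lone M.
  rewrite -(f_sq hh) (lsq_ne1 (X := lmul (A, x) (kone, t))) ?(f_lone hh) //.
  by rewrite lmulP kmul1.
have kk : kmul kone kone = kone by [].
case: (hh (A, x) (kone, t)) => e; rewrite e in hXY;
move: hXY hn hu h h1;
case: (f (A, x)) => A' u; case: (f (kone, t)) => B' n /= hXY hn hu /eqP eA eB;
subst A' B'; rewrite lmulP kk eqxx in hXY;
  rewrite (lsq_1 (X := (kone, _)) (erefl _)) /= in hXY; move: (f_equal snd hXY) => /= /eqP; apply/negP.
- by rewrite sqM // hu mul1g.
- by rewrite sqM // hu mulg1.
Qed.

End Main.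

Section Main2.
Local Open Scope group_scope.

Lemma f_swap (M : finGroupType) (f : LM M -> LM M) :
  abelian [set: M] -> injective f ->
  (forall X Y, f (lmul X Y) = lmul (f X) (f Y) \/ f (lmul X Y) = lmul (f Y) (f X)) ->
  forall X Y, lmul X Y != lmul Y X ->
  (f (lmul X Y)).2 * (f (lmul Y X)).2 = (lmul (f X) (f Y)).2 * (lmul (f Y) (f X)).2.
Proof.
move=> ab hi hh X Y hne.
case: (hh X Y) => e1; case: (hh Y X) => e2.
- by rewrite e1 e2.
- by move: hne; rewrite (hi _ _ (etrans e1 (esym e2))) eqxx.
- by move: hne; rewrite (hi _ _ (etrans e1 (esym e2))) eqxx.
- by rewrite e1 e2 abel_comm.
Qed.

Lemma f_inv (M : finGroupType) (f : LM M -> LM M) :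
  abelian [set: M] -> 2 < exponent [set: M] -> injective f ->
  (forall X Y, f (lmul X Y) = lmul (f X) (f Y) \/ f (lmul X Y) = lmul (f Y) (f X)) ->
  forall C, C != kone -> (f (C, 1)).2 * (f (C, 1)).2 = 1.
Proof.
move=> ab hexp hi hh C hC.
have [A [B [hA hB hAB]]] : exists A B, [/\ A != kone, B != kone & kmul A B = C].
  move: hC; case: C => [[] []] hC;
    [exists (true, false), (false, true) | exists (false, true), (true, true)
    | exists (true, false), (true, true) | by move: hC; rewrite eqxx]; by [].
have [t ht] := exists_big hexp.
have htt : t != t^-1.
  apply/negP => /eqP e; move: ht; by rewrite {2}e mulgV eqxx.
have hne : (C, t) != (C, t^-1).
  apply/negP => /eqP e; move: (f_equal snd e) => /= /eqP; by apply/negP.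
have e1 : lmul (A, 1) (B, t) = (C, t).
  by rewrite lmulP (negbTE hB) invg1 mul1g hAB.
have e2 : lmul (B, t) (A, 1) = (C, t^-1).
  by rewrite lmulP (negbTE hA) mulg1 kmulC hAB.
have r1 := f_swap ab hi hh (X := (A, 1)) (Y := (B, t)).
rewrite e1 e2 in r1; have {r1} r1 := r1 hne.
have hfA := f_P ab hexp hi hh 1 hA.
have hfB := f_P ab hexp hi hh t hB.
move: r1 hfA hfB; case: (f (A, 1)) => A' p; case: (f (B, t)) => B' q /= r1 hA' hB'.
rewrite !lmulP (negbTE hA') (negbTE hB') /= in r1.
rewrite mulgA -(mulgA _ q) mulgV mulg1 mulVg in r1.
have e3 : lmul (C, 1) (kone, t) = (C, t).
  by rewrite lmulP kmul1 eqxx mul1g.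
have e4 : lmul (kone, t) (C, 1) = (C, t^-1).
  by rewrite lmulP (negbTE hC) mulg1 kmul1l.
have r2 := f_swap ab hi hh (X := (C, 1)) (Y := (kone, t)).
rewrite e3 e4 in r2; have {r2} r2 := r2 hne.
have hY : lmul (kone, t) (kone, t) != lone M.
  rewrite (lsq_1 (X := (kone, t)) (erefl _)); apply/negP => /eqP e.
  by move: (f_equal snd e) => /= /eqP; apply/negP.
have [hW _] := f_big hi hh hY.
have hfC := f_P ab hexp hi hh 1 hC.
rewrite r1 in r2; move: r2 hfC hW.
case: (f (C, 1)) => C' z; case: (f (kone, t)) => D n /= r2 hC' hD; subst D.
rewrite !lmulP (negbTE hC') eqxx /= in r2.
by rewrite r2 mulgA -(mulgA z n) mulgV mulg1.
Qed.

End Main2.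

Theorem proposition4p2 (M : finGroupType) (f : LM M -> LM M) :
  abelian [set: M] -> 2 < exponent [set: M] ->
  half_automorphism f -> in_HM (f @: K1 M).
Proof.
move=> ab hexp [hb hh]; have hi := bij_inj hb.
pose g := fun A : Klein => f (A, 1%g).
have g1 : g kone = lone M by exact: (f_lone hh).
have gimg : f @: K1 M = g @: [set: Klein].
  apply/setP => Y; apply/imsetP/imsetP => -[X hX ->].
  - exists X.1; first by rewrite in_setT.
    rewrite inE in hX; by case: X hX => A x /= /eqP ->.
  - by exists (X, 1%g); rewrite // inE.
have ginv : forall A, ((g A).2 * (g A).2 = 1)%g.
  move=> A; case: (boolP (A == kone)) => hA.
  - by rewrite (eqP hA) g1 /= mulg1.
  - exact: (f_inv ab hexp hi hh hA).
have gmul : forall A B, g (kmul A B) = lmul (g A) (g B).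
  move=> A B; have e : lmul (A, (1%g : M)) (B, (1%g : M)) = (kmul A B, (1%g : M)).
    by rewrite lmulP; case: eqP; rewrite ?invg1 mulg1.
  rewrite /g -e. case: (hh (A, 1%g) (B, 1%g)) => -> //.
  apply: lmul_inv2 => //; [exact: (ginv B) | exact: (ginv A)].
have ginj : injective g.
  move=> A B /hi e; exact: (f_equal fst e).
have gP : forall A, A != kone -> (g A).1 != kone.
  move=> A hA; exact: (f_P ab hexp hi hh 1%g hA).
rewrite gimg; split.
- split.
  + by apply/imsetP; exists kone.
  + move=> X Y /imsetP [A _ ->] /imsetP [B _ ->]; rewrite -gmul.
    by apply/imsetP; exists (kmul A B).
  + move=> X Y Z /imsetP [A _ ->] /imsetP [B _ ->] e.
    apply/imsetP; exists (kmul A B) => //.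
    apply: (@lcancel _ (g A)); by rewrite e -gmul kmulK.
  + move=> X Y Z /imsetP [A _ ->] /imsetP [B _ ->] e.
    apply/imsetP; exists (kmul B A) => //.
    apply: (@rcancel _ (g A)); by rewrite e -gmul kmulKr.
- by exists g.
- have -> : g @: [set: Klein] :&: oneM M = [set lone M].
    apply/setP => Y; rewrite !inE; apply/andP/eqP.
    + move=> [/imsetP [A _ ->] h1]; case: (boolP (A == kone)) => hA.
      * by rewrite (eqP hA).
      * by move: (gP A hA); rewrite h1.
    + move=> ->; split; last by [].
      by apply/imsetP; exists kone.
  exact: cards1.
Qed.
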